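(* Let $\tau\in(0,1]$ and suppose that $\alpha=(2/k)^{1/((2-\tau)d)}$ (in addition to $\alpha=2^{-r}$ for a positive integer $r$). Let $p$ be a positive integer. Then, under the Fast-Filter model described in the context, $$\mathbb{E}\Big[\sum_{i=1}^k|S_i|\Big]=2^{1/(2-\tau)}\,N\,k^{1-1/(2-\tau)}=O\big(Nk^{1-1/(2-\tau)}\big),$$ and, for every $i\in[k]$, $$\frac{k}{p}\,\big(\mathbb{E}[|S_i|]\big)^2=O\big(N^2k^{1-2/(2-\tau)}/p\big).$$
   Context: Let $G=(U,V,E)$ be a bipartite graph with $|U|=M$ and $|V|=N$. For $v\in V$ let $\Gamma(v)\subseteq U$ be its set of neighbours, and assume $|\Gamma(v)|=d\ge 1$ for every $v\in V$. Let $k=2^{m}$ and $\alpha=2^{-r}$, where $m,r$ are positive integers. Identify $[k]=\{1,\dots,k\}$ bijectively with the vector space $\mathrm{GF}(2)^m$ (for instance via the binary representation of $i-1$). Fast-Filter model: for each $u\in U$, independently draw a uniformly random matrix $A'_u\in\mathrm{GF}(2)^{r\times m}$ and a uniformly random vector $b'_u\in\mathrm{GF}(2)^{r}$; all of these are mutually independent. For $v\in V$, let $A^v$ be the $(dr)\times m$ matrix obtained by stacking the matrices $A'_u$, $u\in\Gamma(v)$, in a fixed order, and let $b^v\in\mathrm{GF}(2)^{dr}$ be obtained by stacking the $b'_u$, $u\in\Gamma(v)$, in the same order. For $i\in[k]$ (viewed as a vector in $\mathrm{GF}(2)^m$), the survival set is $S_i=\{v\in V: A^v i+b^v=0\}$,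 with arithmetic over $\mathrm{GF}(2)$. *)

(* Defs.v *)
From HB Require Import structures.
From mathcomp Require Import all_boot all_order all_algebra.
From Stdlib Require Import Reals.
Set Implicit Arguments. Unset Strict Implicit. Unset Printing Implicit Defensive.

(* U = 'I_M, V = 'I_N; GF(2) = 'F_2.  [k] with k = 2^m is identified with
   GF(2)^m, i.e. column vectors 'cV['F_2]_m. *)

(* One outcome of the Fast-Filter randomness: for every u in U a pair
   (A'_u, b'_u) with A'_u in GF(2)^{r x m}, b'_u in GF(2)^r.  The model draws
   all of these uniformly and independently, i.e. the outcome is uniform on
   this finite type. *)
Definition outcome (M r m : nat) : finType :=
  {ffun 'I_M -> 'M['F_2]_(r, m) * 'cV['F_2]_r}.

(* A^v i + b^v = 0, where A^v, b^v stack the blocks A'_u, b'_u (u in Gamma(v)):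
   a stacked vector is zero iff each of its blocks is zero. *)
Local Open Scope ring_scope.
Definition survives (M N r m : nat) (Gam : 'I_N -> {set 'I_M})
  (w : outcome M r m) (i : 'cV['F_2]_m) (v : 'I_N) : bool :=
  [forall u in Gam v, ((w u).1 *m i + (w u).2 == 0)].
Local Close Scope ring_scope.

Definition Sset (M N r m : nat) (Gam : 'I_N -> {set 'I_M})
  (w : outcome M r m) (i : 'cV['F_2]_m) : {set 'I_N} :=
  [set v | survives Gam w i v].

Definition E_sum_S (M N r m : nat) (Gam : 'I_N -> {set 'I_M}) : R :=
  (INR (\sum_(w : outcome M r m) \sum_(i : 'cV['F_2]_m) #|Sset Gam w i|)
   / INR #|outcome M r m|)%R.

Definition E_S (M N r m : nat) (Gam : 'I_N -> {set 'I_M}) (i : 'cV['F_2]_m) : R :=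
  (INR (\sum_(w : outcome M r m) #|Sset Gam w i|) / INR #|outcome M r m|)%R.

(* Main.v *)
Require Import Defs.
From HB Require Import structures.
From mathcomp Require Import all_boot all_order all_algebra.
From Stdlib Require Import Reals.
From Stdlib Require Import Lra.

Set Implicit Arguments. Unset Strict Implicit.
Import GRing.Theory.

Section Comb.

Local Open Scope ring_scope.

Lemma foldr_prod (T: finType) (f: T -> nat) : foldr muln 1%N [seq f x | x : T] = (\prod_x f x)%N.
Proof. by rewrite foldrE big_image. Qed.

Lemma count_pairs (r m : nat) (i : 'cV['F_2]_m) :
  #|[pred p : ('M['F_2]_(r,m) * 'cV['F_2]_r)%type | (p.1 *m i + p.2 == 0)]| = #|{: 'M['F_2]_(r,m)}|.
Proof.
pose f := fun A : 'M['F_2]_(r,m) => (A, - (A *m i)).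
have finj : injective f by move=> A B [].
rewrite -cardsT -(card_imset setT finj).
apply: eq_card => -[A b]; rewrite inE /=; apply/idP/imsetP.
  move/eqP=> h; exists A => //; rewrite /f; congr pair.
  by rewrite -{1}[b](addKr (A *m i)) h addr0.
by case=> A' _ [-> ->]; rewrite subrr.
Qed.

Lemma count_surv M N r m (Gam : 'I_N -> {set 'I_M}) (i : 'cV['F_2]_m) v :
  muln #|[set w : outcome M r m | survives Gam w i v]| (expn (expn 2 r) #|Gam v|) = #|{: outcome M r m}|.
Proof.
pose P := [pred p : ('M['F_2]_(r,m) * 'cV['F_2]_r)%type | (p.1 *m i + p.2 == 0)].
pose F := fun x : 'I_M => if x \in Gam v then P else predT.
have -> : #|[set w : outcome M r m | survives Gam w i v]| = #|(family_mem (fun x => mem (F x)) : simpl_pred (outcome M r m))|.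
  apply: eq_card => w; rewrite inE; apply/forall_inP/familyP.
    move=> h x; rewrite /F; case: ifP => // /h //.
  by move=> h x xG; have := h x; rewrite /F xG.
have cV : #|{: 'cV['F_2]_r}| = expn 2 r.
  by rewrite card_mx card_Fp // muln1.
rewrite card_family foldr_prod /outcome card_ffun card_prod card_ord -cV.
rewrite (bigID (fun x => x \in Gam v)) /= -prod_nat_const.
rewrite mulnAC -big_split /=.
rewrite (eq_bigr (fun _ => muln #|'M['F_2]_(r,m)| #|'cV['F_2]_r|)); last first.
  by move=> x xG; rewrite /F xG count_pairs.
rewrite [X in muln _ X](eq_bigr (fun _ => muln #|'M['F_2]_(r,m)| #|'cV['F_2]_r|)); last first.
  move=> x /negbTE xG; rewrite /F xG.
  by rewrite (eq_card (B := predT)) // -card_prod; apply: eq_card => -[].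
by rewrite -[in RHS](card_ord M) -prod_nat_const [in RHS](bigID (fun x => x \in Gam v)).
Qed.

Local Close Scope ring_scope.
Lemma sum_S M N r m (Gam : 'I_N -> {set 'I_M}) (i : 'cV['F_2]_m) d :
  (forall v, #|Gam v| = d) ->
  muln (\sum_(w : outcome M r m) #|Sset Gam w i|)%N (expn (expn 2 r) d)
     = muln N #|{: outcome M r m}|.
Proof.
move=> hd.
have -> : (\sum_(w : outcome M r m) #|Sset Gam w i|
   = \sum_(v : 'I_N) #|[set w : outcome M r m | survives Gam w i v]|)%N.
  under eq_bigr => w _ do rewrite -sum1_card big_mkcond /=.
  rewrite exchange_big /=; apply: eq_bigr => v _.
  apply/esym; rewrite -sum1_card big_mkcond /=; apply: eq_bigr => w _.
  by rewrite !inE.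
rewrite big_distrl /=.
rewrite (eq_bigr (fun _ => #|{: outcome M r m}|)) ?sum_nat_const ?card_ord //.
by move=> v _; rewrite -(hd v) count_surv.
Qed.

Lemma sum_all M N r m (Gam : 'I_N -> {set 'I_M}) d :
  (forall v, #|Gam v| = d) ->
  muln (\sum_(w : outcome M r m) \sum_(i : 'cV['F_2]_m) #|Sset Gam w i|)%N (expn (expn 2 r) d)
     = muln (expn 2 m) (muln N #|{: outcome M r m}|).
Proof.
move=> hd; rewrite exchange_big /= big_distrl /=.
rewrite (eq_bigr (fun _ => muln N #|{: outcome M r m}|)).
  by rewrite sum_nat_const card_mx card_Fp // muln1.
by move=> i _; rewrite sum_S.
Qed.
End Comb.

Lemma expn_Nat (a b : nat) : expn a b = Nat.pow a b.
Proof. elim: b => [|b IH] //=; by rewrite expnS IH. Qed.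

Lemma INR_pos_out M r m : (0 < INR #|{: outcome M r m}|)%R.
Proof.
apply: lt_0_INR; apply/ltP; apply/card_gt0P.
by exists [ffun _ => ((GRing.zero : 'M['F_2]_(r,m)), (GRing.zero : 'cV['F_2]_r))].
Qed.

Theorem mainTheorem7 :
  exists C : R,
  forall (M N d m r p : nat) (Gam : 'I_N -> {set 'I_M}) (tau : R),
    (0 < tau <= 1)%R ->
    (0 < d)%N -> (0 < m)%N -> (0 < r)%N -> (0 < p)%N ->
    (forall v : 'I_N, #|Gam v| = d) ->
    (* alpha = 2^{-r} = (2/k)^{1/((2-tau) d)}, with k = 2^m *)
    ((/ 2) ^ r = Rpower (2 / INR (2 ^ m)) (1 / ((2 - tau) * INR d)))%R ->
    (@E_sum_S M N r m Gam
       = Rpower 2 (1 / (2 - tau)) * INR N * Rpower (INR (2 ^ m)) (1 - 1 / (2 - tau)))%R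
    /\
    (forall i : 'cV['F_2]_m,
       INR (2 ^ m) / INR p * (@E_S M N r m Gam i) ^ 2
       <= C * (INR N ^ 2 * Rpower (INR (2 ^ m)) (1 - 2 / (2 - tau)) / INR p))%R.
Proof.
exists 4%R => M N d m r p Gam tau [ht0 ht1] hd0 hm0 hr0 hp0 hGam hal.
set K := INR (2 ^ m).
set a := (1 / (2 - tau))%R.
set X := Rpower (2 / K) a.
have Kpos : (0 < K)%R by apply: lt_0_INR; apply/ltP; rewrite -expn_Nat expn_gt0.
have dpos : (0 < INR d)%R by apply: lt_0_INR; apply/ltP.
have ppos : (0 < INR p)%R by apply: lt_0_INR; apply/ltP.
have Opos := INR_pos_out M r m.
have hX : (((/ 2) ^ r) ^ d = X)%R.
  rewrite hal -Rpower_pow; last by apply: exp_pos.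
  rewrite Rpower_mult /X /a; f_equal; field; lra.
have hc : (INR (expn (expn 2 r) d) * X = 1)%R.
  rewrite -hX !expn_Nat !pow_INR -pow_mult -pow_mult.
  rewrite -Rpow_mult_distr. rewrite Rinv_r; [by rewrite pow1| simpl; lra].
have ES : forall i, @E_S M N r m Gam i = (INR N * X)%R.
  move=> i; rewrite /E_S.
  have := sum_S r i hGam => /(congr1 INR); rewrite !mult_INR => h.
  apply: (Rmult_eq_reg_r (INR #|{: outcome M r m}|)); last by lra.
  rewrite /Rdiv Rmult_assoc Rinv_l; last by lra.
  rewrite Rmult_1_r -[LHS]Rmult_1_r -hc -Rmult_assoc h; ring.
have ESum : @E_sum_S M N r m Gam = (K * INR N * X)%R.
  rewrite /E_sum_S.
  have := sum_all r m hGam => /(congr1 INR); rewrite !mult_INR => h.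
  apply: (Rmult_eq_reg_r (INR #|{: outcome M r m}|)); last by lra.
  rewrite /Rdiv Rmult_assoc Rinv_l; last by lra.
  rewrite Rmult_1_r -[LHS]Rmult_1_r -hc -Rmult_assoc h /K expn_Nat; ring.
have lnX : X = exp (a * (ln 2 - ln K)).
  rewrite /X /Rpower /Rdiv ln_mult; [|lra|by apply: Rinv_0_lt_compat].
  by rewrite ln_Rinv //; f_equal; ring.
have Kexp : K = exp (ln K) by rewrite exp_ln.
have ha : (0 < a <= 1)%R.
  rewrite /a; split; first by apply: Rdiv_lt_0_compat; lra.
  apply: (Rmult_le_reg_r (2 - tau)); first lra.
  rewrite /Rdiv Rmult_assoc Rinv_l; lra.
split.
  rewrite ESum /Rpower.
  have e : (K * X = exp (a * ln 2) * exp ((1 - a) * ln K))%R.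
    by rewrite lnX {1}Kexp -!exp_plus; f_equal; ring.
  replace (K * INR N * X)%R with (K * X * INR N)%R by ring.
  rewrite e; ring.
move=> i; rewrite ES.
have e : (K * X ^ 2 = Rpower 2 (2 * a) * Rpower K (1 - 2 / (2 - tau)))%R.
  have h2 : (2 / (2 - tau) = 2 * a)%R by rewrite /a; field; lra.
  rewrite /Rpower lnX {1}Kexp /= Rmult_1_r -!exp_plus h2; f_equal; ring.
have h4 : (Rpower 2 (2 * a) <= 4)%R.
  have -> : 4%R = Rpower 2 (INR 2) by rewrite Rpower_pow; simpl; lra.
  apply: Rle_Rpower; first lra. simpl; lra.
have E0 : (0 <= Rpower K (1 - 2 / (2 - tau)))%R by left; apply: exp_pos.
have N0 : (0 <= INR N ^ 2 / INR p)%R.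
  apply: Rmult_le_pos; [apply: pow2_ge_0 | left; apply: Rinv_0_lt_compat; lra].
replace (K / INR p * (INR N * X) ^ 2)%R with (INR N ^ 2 / INR p * (K * X ^ 2))%R
  by (field; lra).
rewrite e.
replace (4 * (INR N ^ 2 * Rpower K (1 - 2 / (2 - tau)) / INR p))%R
  with (INR N ^ 2 / INR p * (4 * Rpower K (1 - 2 / (2 - tau))))%R by (field; lra).
apply: Rmult_le_compat_l => //.
by apply: Rmult_le_compat_r.
Qed.
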